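(* Let $G$ be a finite group and let $\chi$ be the character of an irreducible complex representation of $G$ of dimension $n$. Then for every $g\in G$, $$c(g)\le\frac12\Big(1+\frac{1}{n^3}\mathrm{Re}(\chi(g))\Big),$$ and in particular $$c(G)\le\frac12\Big(1+\frac1{n^2}\Big).$$
   Context: For $g\in G$, $c(g)=|\{(x,y)\in G\times G:[x,y]=g\}|/|G|^2$, and $c(G)=c(1)$ (the commuting probability). *)

(* Defs.v *)
From mathcomp Require Import all_boot all_order all_algebra all_fingroup all_solvable all_field all_character.
Set Implicit Arguments. Unset Strict Implicit. Unset Printing Implicit Defensive.
Import Order.TTheory GRing.Theory Num.Theory.
Local Open Scope ring_scope.

Definition comm_prob_at (gT : finGroupType) (G : {group gT}) (g : gT) : algC :=
  (#|[set xy : gT * gT | [&& xy.1 \in G, xy.2 \in G & ([~ xy.1, xy.2])%g == g]]|%:R)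
  / (#|G|%:R ^+ 2).

Definition comm_prob (gT : finGroupType) (G : {group gT}) : algC :=
  comm_prob_at G 1%g.

(* Main.v *)
Require Import Defs.
From mathcomp Require Import all_boot all_order all_algebra all_fingroup all_solvable all_field all_character.
Import Order.TTheory GRing.Theory Num.Theory.
Local Open Scope ring_scope.
From mathcomp Require Import zify ring.

Lemma Re_ge_neg_norm (z : algC) : - `|z| <= 'Re z.
Proof.
rewrite lerNl -normrN; have := leif_Re_Creal (- z).
by rewrite raddfN => /leifP; case: ifP => [_ /eqP -> | _ /ltW].
Qed.

Lemma bound_x (gT : finGroupType) (G : {group gT}) (i : Iirr G) (g x : gT) :
  x \in G ->
  (#|[set y in G | ([~ x, y])%g == g]|%:R * 2) * ('chi_i 1%g ^+ 2)
   <= #|G|%:R * ('chi_i 1%g ^+ 2 + 'Re ('chi_i (x * g)%g * 'chi_i (x^-1)%g)).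
Proof.
move=> Gx; set Y := [set y in G | _].
have n_ge0 : 0 <= 'chi_i 1%g by apply: ltW; apply: irr1_gt0.
case: (pickP (mem Y)) => [y0 Yy0 | Y0]; last first.
  have -> : #|Y| = 0%N by apply: eq_card0.
  rewrite mul0r mul0r; apply: mulr_ge0; first exact: ler0n.
  rewrite -lerBlDl sub0r; apply: le_trans (Re_ge_neg_norm _).
  rewrite lerN2 normrM expr2; apply: ler_pM => //.
    exact/char1_ge_norm/irr_char.
  exact/char1_ge_norm/irr_char.
have /setIdP[Gy0 /eqP xy0] := Yy0.
have Exg : (x * g)%g = (x ^ y0)%g by rewrite conjg_mulR xy0.
rewrite Exg cfunJ // irr_inv -normCK.
have -> : 'Re (`|'chi_i x| ^+ 2) = `|'chi_i x| ^+ 2.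
  by apply/Creal_ReP; rewrite realX // normr_real.
have [le2 | lt2] := leqP (#|Y| * 2) #|G|.
  apply: le_trans (_ : #|G|%:R * 'chi_i 1%g ^+ 2 <= _).
    by rewrite -natrM ler_wpM2r ?exprn_ge0 // ler_nat.
  by rewrite ler_wpM2l ?ler0n // lerDl exprn_ge0.
have YC : (#|Y| <= #|'C_G[x]%g|)%N.
  rewrite -(card_rcoset 'C_G[x]%g y0); apply: subset_leq_card; apply/subsetP => y.
  move=> Yy; have /setIdP[Gy /eqP xy] := Yy; rewrite mem_rcoset.
  apply/subcent1P; split; first by rewrite groupM ?groupV.
  apply/commgP/conjg_fixP; by rewrite conjgM (conjg_mulR x y) xy Exg conjgK.
have CG : 'C_G[x]%g :=: G.
  apply: index1g; first exact: subsetIl.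
  have := Lagrange (subsetIl G 'C[x]%g); have := indexg_gt0 G 'C_G[x]%g.
  case: #|G : _|%g => [//|[//|k]] _ E.
  exfalso; move: lt2 YC E; set c := #|'C_G[x]%g|; set yy := #|Y|; set gg := #|G|.
  move=> *; nia.
have Zx : x \in 'Z(G)%g.
  apply/centerP; split => // y Gy.
  by rewrite -CG in Gy; case/subcent1P: Gy => _ /esym.
have Zchi : x \in 'Z('chi_i)%CF.
  by move: Zx; rewrite -cap_cfcenter_irr => /bigcapP; apply.
move: Zchi; rewrite irr_cfcenterE // => /eqP ->.
have YG : (#|Y| <= #|G|)%N by apply: subset_leq_card; apply/subsetP => y Yy; have /setIdP[] := Yy.
have -> : #|G|%:R * ('chi_i 1%g ^+ 2 + 'chi_i 1%g ^+ 2) = #|G|%:R * 2 * 'chi_i 1%g ^+ 2 by ring.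
apply: ler_wpM2r; first exact: exprn_ge0.
by apply: ler_wpM2r => //; rewrite ler_nat.
Qed.

Lemma count_eq (gT : finGroupType) (G : {group gT}) (g : gT) :
  #|[set xy : gT * gT | [&& xy.1 \in G, xy.2 \in G & ([~ xy.1, xy.2])%g == g]]|
  = (\sum_(x in G) #|[set y in G | ([~ x, y])%g == g]|)%N.
Proof.
rewrite -sum1_card big_mkcond /=.
set S := [set xy : gT * gT | _].
transitivity (\sum_(x : gT) \sum_(y : gT) (if (x, y) \in S then 1%N else 0%N))%N.
  by rewrite pair_bigA; apply: eq_bigr => -[x y] _.
rewrite [RHS]big_mkcond /=; apply: eq_bigr => x _.
rewrite -sum1_card big_mkcond /=.
case Gx: (x \in G).
  by rewrite [RHS]big_mkcond; apply: eq_bigr => y _; rewrite !inE Gx.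
by rewrite big1 // => y _; rewrite !inE Gx.
Qed.

Lemma key (gT : finGroupType) (G : {group gT}) (i : Iirr G) (g : gT) :
  #|[set xy : gT * gT | [&& xy.1 \in G, xy.2 \in G & ([~ xy.1, xy.2])%g == g]]|%:R * 2 * ('chi_i 1%g ^+ 2)
  <= #|G|%:R * (#|G|%:R * 'chi_i 1%g ^+ 2 + #|G|%:R * 'Re ('chi_i g) / 'chi_i 1%g) :> algC.
Proof.
rewrite count_eq natr_sum !mulr_suml.
apply: le_trans (_ : _ <= \sum_(x in G) #|G|%:R * ('chi_i 1%g ^+ 2 + 'Re ('chi_i (x * g)%g * 'chi_i (x^-1)%g))) _.
  by apply: ler_sum => x Gx; apply: bound_x.
rewrite -mulr_sumr big_split /= sumr_const.
have GP : (#|G|%:R : algC) != 0 by rewrite pnatr_eq0 -lt0n cardG_gt0.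
have cR : 'chi_i 1%g \is Num.real by apply: gtr0_real; apply: irr1_gt0.
have -> : \sum_(x in G) 'Re ('chi_i (x * g)%g * 'chi_i x^-1%g) = #|G|%:R * ('Re ('chi_i g) / 'chi_i 1%g).
  have := generalized_orthogonality_relation g i i; rewrite eqxx mul1r => E.
  have -> : \sum_(x in G) 'Re ('chi_i (x * g)%g * 'chi_i x^-1%g) = 'Re (\sum_(x in G) 'chi_i (x * g)%g * 'chi_i x^-1%g).
    by rewrite raddf_sum.
  have -> : \sum_(x in G) 'chi_i (x * g)%g * 'chi_i x^-1%g = #|G|%:R * ('chi_i g / 'chi_i 1%g).
    by rewrite -E mulrA mulfV // mul1r.
  by rewrite ReMl ?realn // mulrC ReMr ?realV // mulrC.
rewrite le_eqVlt; apply/orP; left; apply/eqP.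
rewrite -mulr_natr; ring.
Qed.

Theorem corollary3 (gT : finGroupType) (G : {group gT}) (i : Iirr G) (n : nat) :
  'chi_i 1%g = n%:R ->
  (forall g, g \in G ->
     comm_prob_at G g <= 2^-1 * (1 + 'Re ('chi_i g) / (n%:R ^+ 3))) /\
  comm_prob G <= 2^-1 * (1 + 1 / (n%:R ^+ 2)).
Proof.
move=> Hn.
have cP : 0 < 'chi_i 1%g by apply: irr1_gt0.
have c0 : (n%:R : algC) != 0 by rewrite -Hn gt_eqF.
have GP : (0 : algC) < #|G|%:R by rewrite ltr0n cardG_gt0.
have G0 : (#|G|%:R : algC) != 0 by rewrite gt_eqF.
have part1 : forall g, comm_prob_at G g <= 2^-1 * (1 + 'Re ('chi_i g) / (n%:R ^+ 3)).
  move=> g; have K := @key gT G i g; rewrite Hn in K.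
  rewrite /comm_prob_at ler_pdivrMr ?exprn_gt0 //.
  set s := (#|_|%:R : algC) in K *.
  have n2P : (0 : algC) < 2 * n%:R ^+ 2 by rewrite mulr_gt0 ?exprn_gt0 // -Hn.
  have K' : s <= #|G|%:R * (#|G|%:R * n%:R ^+ 2 + #|G|%:R * 'Re ('chi_i g) / n%:R) / (2 * n%:R ^+ 2).
    by rewrite ler_pdivlMr // mulrA.
  apply: (le_trans K'); rewrite le_eqVlt; apply/orP; left; apply/eqP.
  by field.
split; first by move=> g _; apply: part1.
have := part1 1%g; rewrite /comm_prob.
have -> : 'Re ('chi_i 1%g) = n%:R by rewrite Hn; apply/Creal_ReP; apply: realn.
have -> : (n%:R : algC) / n%:R ^+ 3 = 1 / n%:R ^+ 2 by field.
done.
Qed.
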